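(* For $1\le r\le n$, $$b_{n,2}(\Delta_{n-r})=\frac{n!}{(n-r)!}.$$
   Context: $B_n^+$ is the positive braid monoid with generators $\sigma_1,\dots,\sigma_{n-1}$ and relations $\sigma_i\sigma_j=\sigma_j\sigma_i$ ($|i-j|\ge2$), $\sigma_i\sigma_j\sigma_i=\sigma_j\sigma_i\sigma_j$ ($|i-j|=1$). $\Delta_1=1$, $\Delta_m=\sigma_1\cdots\sigma_{m-1}\Delta_{m-1}$, with the convention $\Delta_0=1$; $\Delta_m$ is viewed in $B_n^+$ for $m\le n$. Simple $n$-braids are the left (equivalently right) divisors of $\Delta_n$ in $B_n^+$. For simple $x$, $D_L(x)$ (resp. $D_R(x)$) is the set of $i\in\{1,\dots,n-1\}$ with $\sigma_i$ a left (resp. right) divisor of $x$. A sequence $(x_1,\dots,x_d)$ of simple $n$-braids is normal if $x_k=\gcd(\Delta_n,x_k\cdots x_d)$ (greatest common left divisor) for each $k$; equivalently $D_R(x_k)\supseteq D_L(x_{k+1})$ for all $k<d$. For a simple $n$-braid $x$, $b_{n,d}(x)$ is the number of normal sequences $(x_1,\dots,x_{d-1},x)$ of simple $n$-braids. *)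

(* Defs.v *)
(* Positive braid monoid B_n^+ modelled literally:
   elements are words over the generators sigma_1..sigma_{n-1} (encoded as the
   naturals 1..n-1) modulo the congruence generated by the braid relations. *)
From Stdlib Require Import Relations.Relation_Operators.
From mathcomp Require Import all_boot.
Set Implicit Arguments. Unset Strict Implicit. Unset Printing Implicit Defensive.

Definition is_gen (n i : nat) : bool := (0 < i) && (i < n).

Definition bword (n : nat) (w : seq nat) : bool := all (is_gen n) w.

Inductive braid_step (n : nat) : seq nat -> seq nat -> Prop :=
| bs_comm (u v : seq nat) (i j : nat) :
    is_gen n i -> is_gen n j -> (i + 2 <= j) || (j + 2 <= i) ->
    braid_step n (u ++ [:: i; j] ++ v) (u ++ [:: j; i] ++ v)
| bs_braid (u v : seq nat) (i j : nat) :
    is_gen n i -> is_gen n j -> (i == j + 1) || (j == i + 1) ->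
    braid_step n (u ++ [:: i; j; i] ++ v) (u ++ [:: j; i; j] ++ v).

Definition beq (n : nat) : seq nat -> seq nat -> Prop :=
  clos_refl_sym_trans (seq nat) (braid_step n).

Fixpoint delta (m : nat) : seq nat :=
  match m with
  | 0 => [::]
  | m'.+1 => iota 1 m' ++ delta m'
  end.

Definition simple_braid (n : nat) (x : seq nat) : Prop :=
  bword n x /\ exists u, bword n u /\ beq n (x ++ u) (delta n).

Definition in_DL (n : nat) (x : seq nat) (i : nat) : Prop :=
  exists u, bword n u /\ beq n x (i :: u).
Definition in_DR (n : nat) (x : seq nat) (i : nat) : Prop :=
  exists u, bword n u /\ beq n x (rcons u i).

Definition normal_pair (n : nat) (x1 x2 : seq nat) : Prop :=
  forall i, is_gen n i -> in_DL n x2 i -> in_DR n x1 i.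

(* The number of elements of B_n^+ (classes of words under beq) satisfying
   the beq-invariant predicate P is k: there is a list of k pairwise
   non-equal representatives satisfying P, and every word satisfying P is
   equal in B_n^+ to one of them. *)
Definition card_braids (n : nat) (P : seq nat -> Prop) (k : nat) : Prop :=
  exists s : seq (seq nat),
    [/\ size s = k,
        (forall w, w \in s -> P w),
        (forall a b, a < b < size s -> ~ beq n (nth [::] s a) (nth [::] s b))
      & (forall w, P w -> exists2 w', w' \in s & beq n w w')].

Definition b_n2_is (n : nat) (x : seq nat) (k : nat) : Prop :=
  card_braids n (fun x1 => simple_braid n x1 /\ normal_pair n x1 x) k.

(* Main.v *)
Require Import Defs.
From Stdlib Require Import Relations.Relation_Operators.
From mathcomp Require Import all_boot zify.
Set Implicit Arguments. Unset Strict Implicit. Unset Printing Implicit Defensive.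


Definition sw (a x : nat) : nat :=
  if x == a.-1 then a else if x == a then a.-1 else x.

Ltac ifsplit := repeat match goal with
  | |- context [if ?b then _ else _] =>
      lazymatch b with context [if _ then _ else _] => fail | _ =>
        let E := fresh "E" in case E: b end
  end.

Ltac swt := rewrite /sw; repeat (case: eqP => /=; try lia); try lia.

Lemma swK a x : 0 < a -> sw a (sw a x) = x.
Proof. move=> ?; swt. Qed.

Lemma sw_lt n a x : 0 < a < n -> x < n -> sw a x < n.
Proof. move=> ? ?; swt. Qed.

Lemma sw_far a b x : 0 < a -> 0 < b -> (a + 2 <= b) || (b + 2 <= a) ->
  sw a (sw b x) = sw b (sw a x).
Proof. move=> ? ? /orP[?|?]; swt. Qed.

Lemma sw_braid a x : 0 < a -> sw a (sw a.+1 (sw a x)) = sw a.+1 (sw a (sw a.+1 x)).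
Proof. move=> ?; swt. Qed.

Fixpoint pw (w : seq nat) : nat -> nat :=
  match w with [::] => id | a :: w' => fun y => sw a (pw w' y) end.

Lemma pw_cat u v y : pw (u ++ v) y = pw u (pw v y).
Proof. by elim: u => //= a u ->. Qed.

Lemma pw_rcons u a y : pw (rcons u a) y = pw u (sw a y).
Proof. by rewrite -cats1 pw_cat. Qed.

Lemma step_pw n u v : braid_step n u v -> forall y, pw u y = pw v y.
Proof.
case=> u' v' i j /andP[? ?] /andP[? ?] H y; rewrite !pw_cat /=.
  by rewrite sw_far.
case/orP: H => /eqP E; subst; rewrite addn1.
  by rewrite sw_braid.
by rewrite sw_braid.
Qed.

Lemma step_size n u v : braid_step n u v -> size u = size v.
Proof. by case=> *; rewrite !size_cat. Qed.

Lemma beq_pw n u v : beq n u v -> forall y, pw u y = pw v y.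
Proof.
elim=> [? ? /step_pw //|//|? ? _ H y|? ? ? _ H1 _ H2 y].
- by rewrite H.
- by rewrite H1 H2.
Qed.

Lemma beq_size n u v : beq n u v -> size u = size v.
Proof.
elim=> [? ? /step_size //|//|? ? _ H|? ? ? _ H1 _ H2].
- by [].
- by rewrite H1 H2.
Qed.

Lemma beq_refl n u : beq n u u.
Proof. exact: rst_refl. Qed.
Lemma beq_sym n u v : beq n u v -> beq n v u.
Proof. exact: rst_sym. Qed.
Lemma beq_trans n u v w : beq n u v -> beq n v w -> beq n u w.
Proof. exact: rst_trans. Qed.
Lemma beq_step n u v : braid_step n u v -> beq n u v.
Proof. exact: rst_step. Qed.

Lemma step_catl n w u v : braid_step n u v -> braid_step n (w ++ u) (w ++ v).
Proof.
case=> u' v' i j Hi Hj H; rewrite !catA.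
  by rewrite -!(catA (w ++ u')); apply: bs_comm.
by rewrite -!(catA (w ++ u')); apply: bs_braid.
Qed.

Lemma step_catr n w u v : braid_step n u v -> braid_step n (u ++ w) (v ++ w).
Proof.
case=> u' v' i j Hi Hj H.
  by have := bs_comm u' (v' ++ w) Hi Hj H; rewrite -!catA.
by have := bs_braid u' (v' ++ w) Hi Hj H; rewrite -!catA.
Qed.

Lemma beq_catl n w u v : beq n u v -> beq n (w ++ u) (w ++ v).
Proof.
elim=> [? ? /(step_catl w) /beq_step //|*|? ? _ /beq_sym //|? ? ? _ H1 _ H2].
- by apply: beq_refl.
- by apply: beq_trans H1 H2.
Qed.

Lemma beq_catr n w u v : beq n u v -> beq n (u ++ w) (v ++ w).
Proof.
elim=> [? ? /(step_catr w) /beq_step //|*|? ? _ /beq_sym //|? ? ? _ H1 _ H2].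
- by apply: beq_refl.
- by apply: beq_trans H1 H2.
Qed.

Lemma step_rev n u v : braid_step n u v -> braid_step n (rev u) (rev v).
Proof.
have rev3 (u1 x v1 : seq nat) : rev (u1 ++ x ++ v1) = rev v1 ++ rev x ++ rev u1.
  by rewrite !rev_cat catA.
case=> u' v' i j Hi Hj H; rewrite !rev3.
  have := @bs_comm n (rev v') (rev u') j i Hj Hi.
  by rewrite orbC => /(_ H).
exact: (@bs_braid n (rev v') (rev u') i j Hi Hj H).
Qed.

Lemma beq_rev n u v : beq n u v -> beq n (rev u) (rev v).
Proof.
elim=> [? ? /step_rev /beq_step //|*|? ? _ /beq_sym //|? ? ? _ H1 _ H2].
- by apply: beq_refl.
- by apply: beq_trans H1 H2.
Qed.

From mathcomp Require Import fingroup perm.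

Definition ninv n (f : nat -> nat) : nat :=
  \sum_(i < n) \sum_(j < n) ((i < j) && (f j < f i)).

Lemma ninv_eqn n f g : (forall x, x < n -> f x = g x) -> ninv n f = ninv n g.
Proof.
move=> H; apply: eq_bigr => i _; apply: eq_bigr => j _.
by rewrite !H.
Qed.

Lemma ninv_sw n a f : 0 < a < n ->
  ninv n (fun x => f (sw a x)) + (f a < f a.-1) = ninv n f + (f a.-1 < f a).
Proof.
case/andP=> a0 an.
have bn : a.-1 < n by lia.
pose oa := Ordinal an; pose ob := Ordinal bn.
pose t := tperm ob oa.
have Ht : forall i : 'I_n, sw a i = t i.
  move=> i; rewrite /t; case: tpermP => [->|->|Hb Ha] /=; [swt|swt|].
  have H1 : (i : nat) <> a.-1 by move=> E; apply: Hb; apply: val_inj.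
  have H2 : (i : nat) <> a by move=> E; apply: Ha; apply: val_inj.
  swt.
have -> : ninv n (fun x => f (sw a x)) =
   \sum_(i < n) \sum_(j < n) ((t i < t j) && (f j < f i)).
  rewrite (reindex_inj (@perm_inj _ t)); apply: eq_bigr => i _.
  rewrite (reindex_inj (@perm_inj _ t)); apply: eq_bigr => j _.
  by rewrite !Ht !tpermK.
rewrite /ninv !pair_bigA /=.
have Hab : (ob, oa) != (oa, ob).
  by apply/eqP => -[] E _; lia.
rewrite (bigD1 (ob, oa)) //= (bigD1 (oa, ob)) //=.
rewrite [in RHS](bigD1 (ob, oa)) //= [in RHS](bigD1 (oa, ob)) //=.
rewrite !tpermL !tpermR /=.
have -> : \sum_(i | (i != (ob, oa)) && (i != (oa, ob)))
    ((t i.1 < t i.2) && (f i.2 < f i.1)) =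
  \sum_(i | (i != (ob, oa)) && (i != (oa, ob)))
    ((i.1 < i.2) && (f i.2 < f i.1)).
  apply: eq_bigr => -[i j] /andP[H1 H2] /=.
  rewrite -!Ht; congr (_ && _).
  have : ~ ((i:nat) = a.-1 /\ (j:nat) = a).
    by move=> [Hi Hj]; move: H1; rewrite xpair_eqE; case/nandP; move/eqP; apply; apply: val_inj.
  have : ~ ((i:nat) = a /\ (j:nat) = a.-1).
    by move=> [Hi Hj]; move: H2; rewrite xpair_eqE; case/nandP; move/eqP; apply; apply: val_inj.
  move=> N1 N2; rewrite /sw; repeat (case: eqP => /=; try lia); try lia.
have e1 : (a.-1 < a) = true by lia.
have e2 : (a < a.-1) = false by lia.
move: e1 e2; case: (a.-1 < a); case: (a < a.-1) => // _ _.
rewrite /= !addnA; case: (f a < f a.-1); case: (f a.-1 < f a) => /=; lia.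
all: by rewrite eq_sym.
Qed.


Definition good n (f : nat -> nat) :=
  (forall x, x < n -> f x < n) /\
  (forall x y, x < n -> y < n -> f x = f y -> x = y).

Lemma good_sw n a f : good n f -> 0 < a < n -> good n (fun x => f (sw a x)).
Proof.
move=> [H1 H2] Ha; split=> [x xn|x y xn yn E].
  by apply: H1; apply: sw_lt.
have := H2 _ _ (sw_lt Ha xn) (sw_lt Ha yn) E.
by move/(congr1 (sw a)); rewrite !swK //; case/andP: Ha.
Qed.

Lemma bword_rcons n w a : bword n (rcons w a) = bword n w && is_gen n a.
Proof. by rewrite /bword all_rcons andbC. Qed.

Lemma good_pw n w : bword n w -> good n (pw w).
Proof.
elim/last_ind: w => [|w a IH]; first by split.
rewrite bword_rcons => /andP[/IH Hw Ha].
have [H1 H2] := good_sw Hw Ha.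
by split=> [x xn|x y xn yn]; rewrite !pw_rcons; [apply: H1|apply: H2].
Qed.

Lemma ninv_sw_le n a f : 0 < a < n -> ninv n (fun x => f (sw a x)) <= (ninv n f).+1.
Proof. move=> Ha; have := ninv_sw f Ha; lia. Qed.

Lemma ninv_pw_le n u f : bword n u ->
  ninv n (fun y => f (pw u y)) <= ninv n f + size u.
Proof.
elim/last_ind: u => [|u a IH] /=; first by rewrite addn0.
rewrite bword_rcons size_rcons => /andP[/IH Hu Ha].
have -> : ninv n (fun y => f (pw (rcons u a) y)) =
          ninv n (fun y => (fun z => f (pw u z)) (sw a y)).
  by apply: ninv_eqn => x _; rewrite pw_rcons.
have := ninv_sw_le (fun z => f (pw u z)) Ha; lia.
Qed.

Lemma ninv_id n : ninv n id = 0.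
Proof.
rewrite /ninv big1 // => i _; rewrite big1 // => j _.
by case: ltnP => //= H; rewrite ltnNge ltnW.
Qed.

Lemma ninv_pw_size n w : bword n w -> ninv n (pw w) <= size w.
Proof.
move=> /(ninv_pw_le id); rewrite ninv_id add0n.
by have -> : ninv n (fun y => pw w y) = ninv n (pw w) by [].
Qed.

Lemma desc_of_rcons n x a : bword n (rcons x a) ->
  ninv n (pw (rcons x a)) = (size x).+1 ->
  ninv n (pw x) = size x /\ pw (rcons x a) a < pw (rcons x a) a.-1.
Proof.
rewrite bword_rcons => /andP[Hx Ha] Hi.
have E := ninv_sw (pw x) Ha.
have E2 : ninv n (fun y => pw x (sw a y)) = ninv n (pw (rcons x a)).
  by apply: ninv_eqn => y _; rewrite pw_rcons.
have L := ninv_pw_size Hx.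
rewrite E2 Hi in E.
have Ha0 : 0 < a by case/andP: Ha.
rewrite !pw_rcons /sw eqxx.
have -> : (a.-1 == a.-1) = true by rewrite eqxx.
case: eqP => [|_]; first lia.
move: E; case: (pw x a < pw x a.-1); case: (pw x a.-1 < pw x a) => /=; lia.
Qed.

Lemma incr_id n f : good n f -> (forall a, 0 < a < n -> f a.-1 < f a) ->
  forall x, x < n -> f x = x.
Proof.
move=> [H1 H2] Hinc.
have K : forall d i, i + d < n -> f i + d <= f (i + d).
  elim=> [|d IH] i Hd; first by rewrite !addn0.
  have := IH i (ltac:(lia)); have := Hinc (i + d).+1 (ltac:(lia)).
  move=> /= A B; rewrite !addnS; lia.
move=> x xn; apply/eqP; rewrite eqn_leq; apply/andP; split.
  have := K (n - x.+1) x (ltac:(lia)); have := H1 (x + (n - x.+1)) (ltac:(lia)); lia.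
by have := K x 0 (ltac:(lia)); rewrite add0n; lia.
Qed.

Lemma desc_or_id n f : good n f ->
  (exists a, 0 < a < n /\ f a < f a.-1) \/ (forall x, x < n -> f x = x).
Proof.
move=> Hg; case: (boolP [exists a : 'I_n, (0 < a) && (f a < f a.-1)]).
  by case/existsP => a /andP[H1 H2]; left; exists a; rewrite H1 ltn_ord H2.
move=> /existsPn Hn; right; apply: incr_id => // a Ha.
have an : a < n by case/andP: Ha.
have a0 : 0 < a by case/andP: Ha.
have := Hn (Ordinal an); rewrite /= negb_and; case/andP: Ha => -> _ /=.
rewrite -leqNgt leq_eqVlt => /orP[/eqP E|] //.
case: Hg => _ H2; have := H2 a a.-1 an (ltac:(lia)) (esym E); lia.
Qed.

Lemma red_exists n k f : good n f -> ninv n f = k ->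
  exists w, [/\ bword n w, size w = k & forall x, x < n -> pw w x = f x].
Proof.
elim: k f => [|k IH] f Hg Hk.
  case: (desc_or_id Hg) => [[a [Ha Hd]]|Hid].
    have := ninv_sw f Ha; rewrite Hk Hd; lia.
  by exists [::]; split=> // x xn /=; rewrite Hid.
case: (desc_or_id Hg) => [[a [Ha Hd]]|Hid]; last first.
  by move: Hk; rewrite (ninv_eqn Hid) ninv_id.
have := ninv_sw f Ha; rewrite Hk Hd => E.
have Hg' := good_sw Hg Ha.
have Hf : (f a.-1 < f a) = false by apply/negbTE; rewrite -leqNgt ltnW.
rewrite Hf /= in E.
have [|w [Hw Hs Hp]] := IH _ Hg'; first lia.
exists (rcons w a); split.
- by rewrite bword_rcons Hw /is_gen Ha.
- by rewrite size_rcons Hs.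
- move=> x xn; rewrite pw_rcons Hp ?swK //; first by case/andP: Ha.
  exact: sw_lt.
Qed.


Definition feq n (f g : nat -> nat) := forall x, x < n -> f x = g x.

Lemma bword_cat n u v : bword n (u ++ v) = bword n u && bword n v.
Proof. by rewrite /bword all_cat. Qed.

Lemma rc2 (z : seq nat) b a : rcons (rcons z b) a = z ++ [:: b; a] ++ [::].
Proof. by rewrite -!cats1 -catA cats0. Qed.

Lemma rc3 (z : seq nat) c b a : rcons (z ++ [:: c; b]) a = z ++ [:: c; b; a] ++ [::].
Proof. by rewrite -!cats1 -catA cats0. Qed.

Lemma bool_fix (x y k l : nat) : y < x -> k + (y < x) = l + (x < y) -> k.+1 = l.
Proof. by move=> H; rewrite H ltnNge ltnW //= addn0 addn1. Qed.

Section Step.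
Variables (n m : nat).
Hypothesis IH : forall u v, bword n u -> bword n v -> size u = m -> size v = m ->
  ninv n (pw u) = m -> feq n (pw u) (pw v) -> beq n u v.

Lemma mats_step x y a b :
  bword n (rcons x a) -> bword n (rcons y b) -> size x = m -> size y = m ->
  ninv n (pw x) = m -> ninv n (pw y) = m ->
  feq n (pw (rcons x a)) (pw (rcons y b)) ->
  pw (rcons x a) a < pw (rcons x a) a.-1 ->
  pw (rcons x a) b < pw (rcons x a) b.-1 ->
  a <= b -> beq n (rcons x a) (rcons y b).
Proof.
rewrite !bword_rcons => /andP[Bx Ga] /andP[By Gb] Sx Sy Ix Iy E Da Db ab.
set p := pw (rcons x a) in E Da Db.
have Gp : good n p by apply: good_pw; rewrite bword_rcons Bx Ga.
have a0 : 0 < a by case/andP: Ga.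
have b0 : 0 < b by case/andP: Gb.
have an : a < n by case/andP: Ga.
have bn : b < n by case/andP: Gb.
have Ex : feq n (pw x) (fun w => p (sw a w)).
  by move=> w wn; rewrite /p pw_rcons swK.
have Ey : feq n (pw y) (fun w => p (sw b w)).
  by move=> w wn; rewrite E ?pw_rcons ?swK //; apply: sw_lt.
have Ig1 : ninv n (fun w => p (sw a w)) = m by rewrite -(ninv_eqn Ex).
case: (ltngtP a.+1 b) => [ab2|ab1|ab1].
- set g1 := fun w => p (sw a w).
  set sg := fun w => g1 (sw b w).
  have H1 := ninv_sw g1 Gb.
  have e1 : g1 b = p b by rewrite /g1; congr p; swt.
  have e2 : g1 b.-1 = p b.-1 by rewrite /g1; congr p; swt.
  rewrite e1 e2 Ig1 in H1.
  have I2 : (ninv n sg).+1 = m := bool_fix Db H1.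
  have Gs : good n sg by apply: good_sw => //; apply: good_sw.
  have [z [Bz Sz Hz]] := red_exists Gs (erefl _).
  have far : (a + 2 <= b) || (b + 2 <= a) by apply/orP; left; lia.
  have Q1 : beq n x (rcons z b).
    apply: IH => //; first by rewrite bword_rcons Bz Gb.
      by rewrite size_rcons Sz.
    move=> w wn; rewrite Ex // pw_rcons Hz; last by apply: sw_lt.
    by rewrite /sg /g1 swK.
  have Q2 : beq n y (rcons z a).
    apply: IH => //; first by rewrite bword_rcons Bz Ga.
      by rewrite size_rcons Sz.
    move=> w wn; rewrite Ey // pw_rcons Hz; last by apply: sw_lt.
    by rewrite /sg /g1 sw_far // swK.
  rewrite -!cats1; apply: beq_trans (beq_catr [:: a] Q1) _.
  have St : braid_step n (z ++ [:: b; a] ++ [::]) (z ++ [:: a; b] ++ [::]).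
    by apply: (bs_comm z [::] Gb Ga); rewrite orbC.
  rewrite /= in St; rewrite -cats1 -catA /=.
  apply: beq_trans (beq_step St) _.
  have -> : z ++ [:: a; b] = (z ++ [:: a]) ++ [:: b] by rewrite -catA.
  rewrite (cats1 z a); apply: beq_catr; exact: beq_sym.
-
  have ab' : a = b by lia.
  subst b.
  have : beq n x y.
    apply: IH => //.
    by move=> w wn; rewrite Ex // Ey.
  by move/(beq_catr [:: a]); rewrite !cats1.
-
  subst b.
  set g1 := fun w => p (sw a w).
  set g2 := fun w => g1 (sw a.+1 w).
  set sg := fun w => g2 (sw a w).
  have H1 := ninv_sw g1 Gb.
  have e1 : g1 a.+1 = p a.+1 by rewrite /g1; congr p; swt.
  have e2 : g1 a.+1.-1 = p a.-1 by rewrite /g1; congr p; swt.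
  rewrite e1 e2 Ig1 in H1.
  have L1 : p a.+1 < p a.-1 by move: Da Db => /=; lia.
  have I2 : (ninv n g2).+1 = m := bool_fix L1 H1.
  have H2 := ninv_sw g2 Ga.
  have e3 : g2 a = p a.+1 by rewrite /g2 /g1; congr p; swt.
  have e4 : g2 a.-1 = p a by rewrite /g2 /g1; congr p; swt.
  rewrite e3 e4 in H2.
  have I3 : (ninv n sg).+1 = ninv n g2 := bool_fix Db H2.
  have Gs : good n sg by apply: good_sw => //; apply: good_sw => //; apply: good_sw.
  have [z [Bz Sz Hz]] := red_exists Gs (erefl _).
  have Bz1 : bword n (z ++ [:: a; a.+1]) by rewrite bword_cat Bz /bword /= Ga Gb.
  have Bz2 : bword n (z ++ [:: a.+1; a]) by rewrite bword_cat Bz /bword /= Ga Gb.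
  have Q1 : beq n x (z ++ [:: a; a.+1]).
    apply: IH => //; first by rewrite size_cat Sz /=; lia.
    move=> w wn; rewrite Ex // pw_cat /= Hz; last by do 2 apply: sw_lt => //.
    by rewrite /sg /g2 /g1 !swK.
  have Q2 : beq n y (z ++ [:: a.+1; a]).
    apply: IH => //; first by rewrite size_cat Sz /=; lia.
    move=> w wn; rewrite Ey // pw_cat /= Hz; last by do 2 apply: sw_lt => //.
    by rewrite /sg /g2 /g1 sw_braid // !swK.
  rewrite -!cats1; apply: beq_trans (beq_catr [:: a] Q1) _.
  have St : braid_step n (z ++ [:: a; a.+1; a] ++ [::]) (z ++ [:: a.+1; a; a.+1] ++ [::]).
    apply: (bs_braid z [::] Ga Gb); apply/orP; right; by rewrite addn1.
  rewrite /= in St; rewrite -catA /=.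
  apply: beq_trans (beq_step St) _.
  have -> : z ++ [:: a.+1; a; a.+1] = (z ++ [:: a.+1; a]) ++ [:: a.+1] by rewrite -catA.
  apply: beq_catr; exact: beq_sym.
Qed.
End Step.

Lemma matsumoto n m : forall u v, bword n u -> bword n v -> size u = m -> size v = m ->
  ninv n (pw u) = m -> feq n (pw u) (pw v) -> beq n u v.
Proof.
elim: m => [|m IH] u v Bu Bv Su Sv Iu E.
  by move/size0nil: Su => ->; move/size0nil: Sv => ->; apply: beq_refl.
case/lastP: u Bu Su Iu E => [//|x a] Bu Su Iu E.
case/lastP: v Bv Sv E => [//|y b] Bv Sv E.
move: Su Sv; rewrite !size_rcons => -[Su] [Sv].
have [Ix Da] := desc_of_rcons Bu (ltac:(by rewrite Iu Su)).
have Iv : ninv n (pw (rcons y b)) = (size y).+1 by rewrite -(ninv_eqn E) Iu Sv.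
have [Iy Db] := desc_of_rcons Bv Iv.
have Ga : is_gen n a by move: Bu; rewrite bword_rcons => /andP[].
have Gb : is_gen n b by move: Bv; rewrite bword_rcons => /andP[].
have an : a < n by case/andP: Ga.
have bn : b < n by case/andP: Gb.
rewrite Su in Ix; rewrite Sv in Iy.
have E' : feq n (pw (rcons y b)) (pw (rcons x a)) by move=> w wn; rewrite E.
case: (leqP a b) => ab.
  apply: (mats_step IH) => //.
  by rewrite !E //; lia.
apply: beq_sym; apply: (mats_step IH) => //; last exact: ltnW.
by rewrite !E' //; lia.
Qed.


Definition revk k x := if x < k then k - x.+1 else x.

Lemma revkK k x : revk k (revk k x) = x.
Proof.
rewrite /revk; case: (ltnP x k) => H.
  by rewrite ifT; lia.
by rewrite ltnNge H.
Qed.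

Lemma bword_delta n k : k <= n -> bword n (delta k).
Proof.
elim: k => [|k IH] //= kn; rewrite bword_cat IH ?andbT; last lia.
apply/allP => x; rewrite mem_iota => /andP[H1 H2]; rewrite /is_gen; lia.
Qed.

Lemma pw_iota m x : pw (iota 1 m) x = if x < m then x.+1 else if x == m then 0 else x.
Proof.
elim: m x => [|m IH] x; first by case: x.
have -> : iota 1 m.+1 = rcons (iota 1 m) m.+1 by rewrite -cats1 (_ : [:: m.+1] = iota (1 + m) 1) // -iotaD addn1.
rewrite pw_rcons IH /sw /=.
ifsplit; lia.
Qed.

Lemma pw_delta k x : pw (delta k) x = revk k x.
Proof.
elim: k x => [|k IH] x /=; first by rewrite /revk.
rewrite pw_cat IH pw_iota /revk.
ifsplit; lia.
Qed.

Lemma size_delta k : size (delta k) = \sum_(j < k) j.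
Proof. by elim: k => [|k IH] /=; rewrite ?big_ord0 // size_cat size_iota IH big_ord_recr /= addnC. Qed.

Lemma sum_lt_min n j : \sum_(i < n) (i < j) = minn n j.
Proof.
elim: n => [|n IH]; first by rewrite big_ord0 min0n.
rewrite big_ord_recr /= IH; case: (ltnP n j) => H /=; lia.
Qed.

Lemma sum_lt n j : j <= n -> \sum_(i < n) (i < j) = j.
Proof. by move=> H; rewrite sum_lt_min; lia. Qed.

Lemma ninv_revk n k : k <= n -> ninv n (revk k) = \sum_(j < k) j.
Proof.
move=> kn; rewrite /ninv exchange_big /=.
rewrite (big_ord_widen _ (fun j => j) kn).
rewrite [RHS]big_mkcond /=; apply: eq_bigr => j _.
have -> : \sum_(i < n) ((i < j) && (revk k j < revk k i)) = \sum_(i < n) ((j < k) * (i < j)).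
  apply: eq_bigr => i _; rewrite /revk.
  case: (ltnP i j) => H1 /=; last by rewrite muln0.
  case: (ltnP j k) => H2 /=; case: (ltnP i k) => H3; lia.
rewrite -big_distrr /= sum_lt; last exact: ltnW.
by case: (j < k); rewrite ?mul1n ?mul0n.
Qed.

Lemma delta_red n k : k <= n -> ninv n (pw (delta k)) = size (delta k).
Proof.
move=> kn; rewrite size_delta -(ninv_revk kn); apply: ninv_eqn => x _.
exact: pw_delta.
Qed.

Lemma pw_revK w x : pw (rev w) (pw w x) = x.
Proof.
elim: w x => [|a w IH] x //=.
rewrite rev_cons pw_rcons.
have -> : sw a (sw a (pw w x)) = pw w x by rewrite /sw; ifsplit; lia.
exact: IH.
Qed.


Lemma DR_desc n w i : bword n w -> ninv n (pw w) = size w -> is_gen n i ->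
  in_DR n w i -> pw w i < pw w i.-1.
Proof.
move=> Bw Iw Gi [u [Bu H]].
have Sz := beq_size H; have Pw := beq_pw H.
rewrite size_rcons in Sz.
have Bu' : bword n (rcons u i) by rewrite bword_rcons Bu Gi.
have Iu : ninv n (pw (rcons u i)) = (size u).+1.
  by rewrite -Sz -Iw; apply: ninv_eqn => x _; rewrite Pw.
have [_ D] := desc_of_rcons Bu' Iu.
by rewrite !Pw.
Qed.

Lemma desc_DR n w i : bword n w -> ninv n (pw w) = size w -> is_gen n i ->
  pw w i < pw w i.-1 -> in_DR n w i.
Proof.
move=> Bw Iw Gi D.
have H := ninv_sw (pw w) Gi.
have I1 : (ninv n (fun x => pw w (sw i x))).+1 = size w by rewrite -Iw; exact: bool_fix D H.
have Gg : good n (fun x => pw w (sw i x)) by apply: good_sw => //; exact: good_pw.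
have [z [Bz Sz Hz]] := red_exists Gg (erefl _).
have i0 : 0 < i by case/andP: Gi.
exists z; split=> //.
apply: (@matsumoto n (size w)) => //.
- by rewrite bword_rcons Bz Gi.
- by rewrite size_rcons Sz.
- move=> x xn; rewrite pw_rcons Hz ?swK //; exact: sw_lt.
Qed.

Lemma pw_rev_delta k x : pw (rev (delta k)) x = revk k x.
Proof. by rewrite -{1}(revkK k x) -pw_delta pw_revK. Qed.

Lemma rev_delta_red n k : k <= n ->
  bword n (rev (delta k)) /\ ninv n (pw (rev (delta k))) = size (rev (delta k)).
Proof.
move=> kn; split; first by rewrite /bword all_rev; exact: bword_delta.
rewrite size_rev -(delta_red kn); apply: ninv_eqn => x _.
by rewrite pw_rev_delta pw_delta.
Qed.

Lemma DL_delta n k i : k <= n -> 0 < i < k -> in_DL n (delta k) i.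
Proof.
move=> kn Hi.
have [B I] := rev_delta_red kn.
have Gi : is_gen n i by rewrite /is_gen; lia.
have : in_DR n (rev (delta k)) i.
  apply: desc_DR => //; rewrite !pw_rev_delta /revk; ifsplit; lia.
case=> u [Bu H]; exists (rev u); split; first by rewrite /bword all_rev.
by move/beq_rev: H; rewrite revK rev_rcons.
Qed.

Lemma DL_delta_inv n k i : k <= n -> is_gen n i -> in_DL n (delta k) i -> i < k.
Proof.
move=> kn Gi [u [Bu H]].
have [B I] := rev_delta_red kn.
have : in_DR n (rev (delta k)) i.
  exists (rev u); split; first by rewrite /bword all_rev.
  by move/beq_rev: H; rewrite rev_cons.
move/(DR_desc B I Gi); rewrite !pw_rev_delta /revk.
case/andP: Gi => i0 _.
ifsplit; lia.
Qed.

Lemma simple_red n w : simple_braid n w -> ninv n (pw w) = size w.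
Proof.
case=> Bw [u [Bu H]].
have Sz := beq_size H; have Pw := beq_pw H.
have I1 : ninv n (pw (w ++ u)) = size (delta n).
  rewrite -(@delta_red n n) //; apply: ninv_eqn => x _; exact: Pw.
have L1 := ninv_pw_le (pw w) Bu.
have E1 : ninv n (fun y => pw w (pw u y)) = ninv n (pw (w ++ u)).
  by apply: ninv_eqn => x _; rewrite pw_cat.
rewrite E1 in L1.
have L2 := ninv_pw_size Bw.
rewrite size_cat in Sz; lia.
Qed.

Lemma ascent_or_rev n f : good n f ->
  (exists a, 0 < a < n /\ f a.-1 < f a) \/ feq n f (revk n).
Proof.
move=> [G1 G2].
have Gg : good n (fun x => n - (f x).+1).
  split=> [x xn|x y xn yn E]; first by have := G1 x xn; lia.
  apply: G2 => //; have := G1 x xn; have := G1 y yn; lia.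
case: (desc_or_id Gg) => [[a [Ha D]]|Hid].
  left; exists a; split => //.
  have := G1 a (ltac:(lia)); have := G1 a.-1 (ltac:(lia)); lia.
right => x xn; have := Hid x xn; have := G1 x xn; rewrite /revk xn; lia.
Qed.

Lemma ninv_max n f : ninv n f <= ninv n (revk n).
Proof.
have -> : ninv n (revk n) = \sum_(i < n) \sum_(j < n) (i < j).
  apply: eq_bigr => i _; apply: eq_bigr => j _.
  have := ltn_ord i; have := ltn_ord j; rewrite /revk; ifsplit; lia.
apply: leq_sum => i _; apply: leq_sum => j _.
by case: (i < j); case: (f j < f i).
Qed.

Lemma extend n d x : bword n x -> ninv n (pw x) = size x ->
  ninv n (pw x) + d = ninv n (revk n) ->
  exists u, [/\ bword n u, ninv n (pw (x ++ u)) = size (x ++ u) &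
                feq n (pw (x ++ u)) (revk n)].
Proof.
elim: d x => [|d IH] x Bx Ix Hd.
  case: (ascent_or_rev (good_pw Bx)) => [[a [Ha A]]|R].
    have H := ninv_sw (pw x) Ha.
    have L := ninv_max n (fun y => pw x (sw a y)).
    move: H; rewrite ltnNge ltnW //=; lia.
  by exists [::]; rewrite cats0.
case: (ascent_or_rev (good_pw Bx)) => [[a [Ha A]]|R]; last first.
  by move: Hd; rewrite (ninv_eqn R); lia.
have H := ninv_sw (pw x) Ha.
move: H; rewrite ltnNge ltnW //= A addn0 => H.
have Bx' : bword n (rcons x a) by rewrite bword_rcons Bx.
have Ix' : ninv n (pw (rcons x a)) = ninv n (fun y => pw x (sw a y)).
  by apply: ninv_eqn => y _; rewrite pw_rcons.
have [||u [Bu I2 E2]] := IH (rcons x a) Bx'.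
- by rewrite Ix' H Ix size_rcons addn1.
- by rewrite Ix' H; lia.
exists (a :: u); split => //.
- by rewrite /bword /= -/(bword n u) Bu andbT; exact: Ha.
- by rewrite -cat_rcons.
- by rewrite -cat_rcons.
Qed.

Lemma red_simple n x : bword n x -> ninv n (pw x) = size x -> simple_braid n x.
Proof.
move=> Bx Ix; split=> //.
have L := ninv_max n (pw x).
have [u [Bu I2 E2]] := @extend n (ninv n (revk n) - ninv n (pw x)) x Bx Ix (ltac:(lia)).
exists u; split => //.
apply: (@matsumoto n (size (x ++ u))) => //.
- by rewrite bword_cat Bx.
- exact: bword_delta.
- rewrite -(@delta_red n n) // -I2; apply: ninv_eqn => y yn.
  by rewrite pw_delta E2.
- by move=> y yn; rewrite E2 // pw_delta.
Qed.


Section Count.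
Variables (n' k r : nat).
Local Notation n := n'.+1.
Hypothesis Hkr : k + r = n.

Definition Mf (f : {ffun 'I_r -> 'I_n}) : seq nat := [seq val (f j) | j <- enum 'I_r].
Definition Cf f : seq nat := [seq y <- iota 0 n | y \notin Mf f].
Definition Lf f := rev (Cf f) ++ Mf f.
Definition pf f (x : nat) := nth x (Lf f) x.

Variable f : {ffun 'I_r -> 'I_n}.
Hypothesis finj : injective f.

Lemma Mf_uniq : uniq (Mf f).
Proof.
rewrite /Mf map_inj_uniq ?enum_uniq // => i j /val_inj; exact: finj.
Qed.

Lemma Mf_lt x : x \in Mf f -> x < n.
Proof. by case/mapP => j _ ->; exact: ltn_ord. Qed.

Lemma Lf_perm : perm_eq (Lf f) (iota 0 n).
Proof.
have P1 : perm_eq [seq y <- iota 0 n | y \in Mf f] (Mf f).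
  apply: uniq_perm; [exact: filter_uniq (iota_uniq 0 n)|exact: Mf_uniq|].
  move=> y; rewrite mem_filter mem_iota add0n.
  by case H: (y \in Mf f); rewrite ?andbF //= (Mf_lt H).
have P2 : perm_eq ([seq y <- iota 0 n | y \in Mf f] ++ Cf f) (iota 0 n).
  by rewrite /Cf perm_filterC.
rewrite /Lf perm_catC; apply: perm_trans P2.
by rewrite perm_cat // ?perm_rev // perm_sym.
Qed.

Lemma Lf_size : size (Lf f) = n.
Proof. by rewrite (perm_size Lf_perm) size_iota. Qed.

Lemma Lf_uniq : uniq (Lf f).
Proof. by rewrite (perm_uniq Lf_perm) iota_uniq. Qed.

Lemma Mf_size : size (Mf f) = r.
Proof. by rewrite size_map size_enum_ord. Qed.

Lemma Cf_size : size (Cf f) = k.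
Proof. have := Lf_size; rewrite /Lf size_cat size_rev Mf_size; lia. Qed.

Lemma pf_good : good n (pf f).
Proof.
split=> [x xn|x y xn yn].
  have : pf f x \in iota 0 n.
    by rewrite -(perm_mem Lf_perm) /pf mem_nth // Lf_size.
  by rewrite mem_iota.
rewrite /pf (set_nth_default 0 x) ?Lf_size // (set_nth_default 0 y) ?Lf_size //.
move/eqP; rewrite nth_uniq ?Lf_size ?Lf_uniq //; exact/eqP.
Qed.

Lemma pf_tail (j : 'I_r) : pf f (k + j) = f j.
Proof.
rewrite /pf /Lf nth_cat size_rev Cf_size ltnNge leq_addr /=.
rewrite (_ : k + j - k = j); last lia.
rewrite /Mf (nth_map j) ?size_enum_ord //.
by rewrite nth_ord_enum.
Qed.

Lemma sorted_revC : sorted (fun x y => y < x) (rev (Cf f)).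
Proof.
rewrite rev_sorted; apply: sorted_filter; first exact: ltn_trans.
exact: iota_ltn_sorted.
Qed.

Lemma pf_desc a : 0 < a < k -> pf f a < pf f a.-1.
Proof.
move=> Ha.
have S := sorted_revC.
have Hs : size (rev (Cf f)) = k by rewrite size_rev Cf_size.
have H1 : a < k by case/andP: Ha.
have H2 : a.-1 < k by apply: leq_ltn_trans H1; exact: leq_pred.
rewrite /pf /Lf !nth_cat Hs H1 H2.
rewrite (set_nth_default 0 a) ?Hs //.
rewrite (set_nth_default 0 a.-1) ?Hs //.
move/(sortedP 0): S => /(_ a.-1).
have E : a.-1.+1 = a by case/andP: Ha => a0 _; rewrite prednK.
by rewrite E Hs; apply.
Qed.
End Count.

Lemma pf_inj n' k r (Hkr : k + r = n'.+1) (f g : {ffun 'I_r -> 'I_n'.+1}) :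
  injective f -> injective g -> feq n'.+1 (pf f) (pf g) -> f = g.
Proof.
move=> fi gi E; apply/ffunP => j; apply: val_inj => /=.
rewrite -(pf_tail Hkr fi) -(pf_tail Hkr gi); apply: E.
have := ltn_ord j; lia.
Qed.



Lemma cover_perm n' k r (Hkr : k + r = n'.+1) p : good n'.+1 p ->
  (forall a, 0 < a < k -> p a < p a.-1) ->
  exists f : {ffun 'I_r -> 'I_n'.+1}, injective f /\ feq n'.+1 p (pf f).
Proof.
move=> [G1 G2] D.
pose f := [ffun j : 'I_r => inord (p (k + j)) : 'I_n'.+1].
have fv : forall j : 'I_r, val (f j) = p (k + j).
  move=> j; rewrite ffunE /= inordK //; apply: G1; have := ltn_ord j; lia.
have finj : injective f.
  move=> i j E; have E2 : p (k + i) = p (k + j) by rewrite -!fv E.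
  have li := ltn_ord i; have lj := ltn_ord j.
  have := G2 (k + i) (k + j) (ltac:(lia)) (ltac:(lia)) E2.
  by move=> H; apply: val_inj => /=; lia.
exists f; split => //.
set A := map p (iota 0 k); set B := map p (iota k r).
have LB : Mf f = B.
  rewrite /Mf (eq_map fv) /B.
  have -> : iota k r = map (addn k) (iota 0 r) by rewrite -iotaDl addn0.
  by rewrite -map_comp -val_enum_ord -map_comp.
have Lp : A ++ B = map p (iota 0 n'.+1) by rewrite -map_cat -Hkr iotaD.
have Uniq : uniq (map p (iota 0 n'.+1)).
  rewrite map_inj_in_uniq ?iota_uniq // => x y; rewrite !mem_iota !add0n => /andP[_ xn] /andP[_ yn].
  exact: G2.
have Sub : forall x, x < n'.+1 -> x \in map p (iota 0 n'.+1).
  have Hsub : {subset map p (iota 0 n'.+1) <= iota 0 n'.+1}.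
    by move=> y /mapP [z]; rewrite !mem_iota !add0n => /andP[_ zn] ->; apply: G1.
  have Hsz : size (iota 0 n'.+1) <= size (map p (iota 0 n'.+1)) by rewrite size_map.
  have [_ Eq] := uniq_min_size Uniq Hsub Hsz.
  by move=> x xn; rewrite Eq mem_iota add0n.
have AC : A = rev (Cf f).
  apply: (@irr_sorted_eq _ (fun x y => y < x)).
  - by move=> x y z H1 H2; apply: ltn_trans H1.
  - by move=> x; rewrite ltnn.
  - apply/(sortedP 0) => i; rewrite size_map size_iota => Hi.
    rewrite !(nth_map 0) ?size_iota //; last lia.
    rewrite !nth_iota ?add0n //; last lia.
    by apply: D; lia.
  - exact: sorted_revC.
  move=> x; rewrite mem_rev /Cf mem_filter mem_iota add0n LB.
  apply/idP/idP.
    move=> xA.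
    have xn : x < n'.+1 by move: xA => /mapP [y]; rewrite mem_iota => /andP[_ yk] ->; apply: G1; lia.
    rewrite xn leq0n !andbT.
    move: Uniq; rewrite -Lp cat_uniq => /and3P[_ /hasPn H _].
    by apply/negP => xB; have := H x xB; rewrite xA.
  case/andP => xB xn.
  by move: (Sub x xn); rewrite -Lp mem_cat (negbTE xB) orbF.
move=> x xn; rewrite /pf /Lf -AC LB Lp (nth_map 0) ?size_iota //.
by rewrite nth_iota.
Qed.


Lemma choose_list (T : eqType) (l : seq T) (P : T -> seq nat -> Prop) :
  (forall t, t \in l -> exists w, P t w) ->
  exists ws : seq (seq nat), size ws = size l /\
    forall t0 i, i < size l -> P (nth t0 l i) (nth [::] ws i).
Proof.
elim: l => [|t l IH] H; first by exists [::].
have [|ws [S1 H1]] := IH; first by move=> t' Ht'; apply: H; rewrite inE Ht' orbT.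
have [w Hw] := H t (mem_head _ _).
exists (w :: ws); split; first by rewrite /= S1.
by move=> t0 [|i] //= Hi; apply: H1.
Qed.

Theorem proposition4p4 (n r : nat) :
  1 <= r <= n -> b_n2_is n (delta (n - r)) (n`! %/ (n - r)`!).
Proof.
case: n => [|n'] Hr; first lia.
set k := n'.+1 - r.
have Hkr : k + r = n'.+1 by rewrite /k; lia.
have kn : k <= n'.+1 by rewrite /k; lia.
rewrite -ffact_factd; last lia.
set F := enum [set f : {ffun 'I_r -> 'I_n'.+1} | injectiveb f].
have SF : size F = n'.+1 ^_ r by rewrite -cardE card_inj_ffuns !card_ord.
have FI : forall f, f \in F -> injective f.
  by move=> f; rewrite mem_enum inE => /injectiveP.
pose P := fun (f : {ffun 'I_r -> 'I_n'.+1}) w =>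
  [/\ bword n'.+1 w, ninv n'.+1 (pw w) = size w & feq n'.+1 (pw w) (pf f)].
have [ws [Sws Hws]] : exists ws : seq (seq nat), size ws = size F /\
    forall t0 i, i < size F -> P (nth t0 F i) (nth [::] ws i).
  apply: choose_list.
  move=> f /FI fi.
  have [w [Bw Sw Hw]] := red_exists (pf_good fi) (erefl _).
  exists w; split => //.
  by rewrite Sw; apply: ninv_eqn.
pose f0 : {ffun 'I_r -> 'I_n'.+1} := [ffun=> ord0].
exists ws; split.
- by rewrite Sws SF.
- move=> w wws.
  have iw : index w ws < size ws by rewrite index_mem.
  have := Hws f0 (index w ws) (ltac:(by rewrite -Sws)).
  rewrite nth_index //.
  have fi : injective (nth f0 F (index w ws)) by apply: FI; apply: mem_nth; rewrite -Sws.
  case=> Bw Iw Ew; split; first exact: red_simple.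
  move=> i Gi /(DL_delta_inv kn Gi) ik.
  apply: desc_DR => //.
  have i0 : 0 < i by case/andP: Gi.
  rewrite !Ew; [|lia|lia].
  by apply: (pf_desc Hkr fi); rewrite i0.
- move=> a b /andP[ab bs] Hb.
  have as' : a < size F by rewrite -Sws; lia.
  have bs' : b < size F by rewrite -Sws.
  have [Ba Ia Ea] := Hws f0 a as'.
  have [Bb Ib Eb] := Hws f0 b bs'.
  have E : feq n'.+1 (pf (nth f0 F a)) (pf (nth f0 F b)).
    by move=> x xn; rewrite -Ea // -Eb // (beq_pw Hb).
  have := pf_inj Hkr (FI _ (mem_nth f0 as')) (FI _ (mem_nth f0 bs')) E.
  move/eqP; rewrite nth_uniq ?enum_uniq //; lia.
- move=> w [Sw Nw].
  have Bw := Sw.1.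
  have Iw := simple_red Sw.
  have D : forall a, 0 < a < k -> pw w a < pw w a.-1.
    move=> a Ha.
    have Ga : is_gen n'.+1 a by rewrite /is_gen; lia.
    exact: (DR_desc Bw Iw Ga (Nw a Ga (DL_delta kn Ha))).
  have [f [fi Ef]] := cover_perm Hkr (good_pw Bw) D.
  have fF : f \in F by rewrite mem_enum inE; apply/injectiveP.
  have iF : index f F < size F by rewrite index_mem.
  have [Bw' Iw' Ew'] := Hws f0 _ iF.
  rewrite nth_index // in Ew'.
  exists (nth [::] ws (index f F)); first by apply: mem_nth; rewrite Sws.
  apply: (@matsumoto _ (size w)) => //.
  + rewrite -Iw' -Iw; apply: ninv_eqn => x xn; by rewrite Ew' // Ef.
  + by move=> x xn; rewrite Ef // Ew'.
Qed.
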